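(* Suppose that $k\geq2$ is an integer, that $q_1,\ldots,q_k$ are positive integers, and that for each $1\leq i\leq k$, $C_i$ and $D_i$ are integers satisfying $D_i-C_i\geq\max_{1\leq j\leq k}q_j$. Let $r=\gcd(q_1,\ldots,q_k)$, \[\mathcal{A}=\Big\{\sum_{i=1}^k a_iq_i \;:\; a_i\in\mathbb{Z},\ C_i\leq a_i\leq D_i\Big\},\qquad C=\sum_{i=1}^kC_iq_i,\qquad D=\sum_{i=1}^kD_iq_i .\] Then \[\mathcal{A}\subset\Big\{mr \;:\; m\in\mathbb{Z},\ \frac{C}{r}\leq m\leq\frac{D}{r}\Big\}\] and \[\Big\{mr \;:\; m\in\mathbb{Z},\ \frac{C}{r}+\frac1{r^2}\sum_{i=1}^{k-1}q_iq_{i+1}\leq m\leq\frac{D}{r}-\frac1{r^2}\sum_{i=1}^{k-1}q_iq_{i+1}\Big\}\subset\mathcal{A}.\] *)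

(* Defs.v *)
From Stdlib Require Import ZArith QArith List.
Open Scope Z_scope.

Definition zsum (k : nat) (f : nat -> Z) : Z :=
  fold_right Z.add 0 (map f (seq 1 k)).

Definition zgcd_list (k : nat) (q : nat -> Z) : Z :=
  fold_right Z.gcd 0 (map q (seq 1 k)).

Definition setA (k : nat) (q C D : nat -> Z) (n : Z) : Prop :=
  exists a : nat -> Z,
    (forall i, (1 <= i <= k)%nat -> C i <= a i <= D i) /\
    n = zsum k (fun i => a i * q i).

(* Main.v *)
Require Import Defs.
From Stdlib Require Import ZArith QArith List.

From Stdlib Require Import Lia.
Open Scope Z_scope.

Lemma fold_add_acc (l : list Z) a : fold_right Z.add a l = fold_right Z.add 0 l + a.
Proof. induction l; simpl; lia. Qed.

Lemma zsum_S k f : zsum (S k) f = zsum k f + f (S k).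
Proof. unfold zsum. rewrite seq_S, map_app, fold_right_app. simpl.
rewrite fold_add_acc. replace (1 + k)%nat with (S k) by lia. lia. Qed.

Lemma fold_gcd_acc (l : list Z) a : 0 <= a -> fold_right Z.gcd a l = Z.gcd (fold_right Z.gcd 0 l) a.
Proof. intros Ha. induction l; simpl.
- destruct a; simpl; lia.
- rewrite IHl, Z.gcd_assoc. reflexivity. Qed.

Lemma zgcd_S k q : zgcd_list (S k) q = Z.gcd (zgcd_list k q) (q (S k)).
Proof. unfold zgcd_list. rewrite seq_S, map_app, fold_right_app. simpl.
rewrite fold_gcd_acc by (rewrite Z.gcd_0_r; lia). rewrite Z.gcd_0_r, Z.gcd_abs_r.
replace (1 + k)%nat with (S k) by lia. reflexivity. Qed.

Lemma zsum_ext k f g : (forall i, (1 <= i <= k)%nat -> f i = g i) -> zsum k f = zsum k g.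
Proof. induction k; intros H. reflexivity. rewrite !zsum_S, IHk, H. reflexivity. lia.
intros; apply H; lia. Qed.

Lemma zsum_le k f g : (forall i, (1 <= i <= k)%nat -> f i <= g i) -> zsum k f <= zsum k g.
Proof. induction k; intros H. unfold zsum; simpl; lia. rewrite !zsum_S.
assert (f (S k) <= g (S k)) by (apply H; lia).
assert (zsum k f <= zsum k g) by (apply IHk; intros; apply H; lia). lia. Qed.

Lemma zsum_add k f g : zsum k (fun i => f i + g i) = zsum k f + zsum k g.
Proof. induction k. reflexivity. rewrite !zsum_S, IHk. ring. Qed.

Lemma zsum_div k f r : (forall i, (1 <= i <= k)%nat -> (r | f i)) -> (r | zsum k f).
Proof. induction k; intros H. exists 0. reflexivity. rewrite zsum_S.
apply Z.divide_add_r. apply IHk; intros; apply H; lia. apply H; lia. Qed.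

Lemma zgcd_nonneg k q : 0 <= zgcd_list k q.
Proof. destruct k. unfold zgcd_list; simpl; lia. rewrite zgcd_S. apply Z.gcd_nonneg. Qed.

Lemma zgcd_div k q : forall i, (1 <= i <= k)%nat -> (zgcd_list k q | q i).
Proof. induction k; intros i Hi. lia. rewrite zgcd_S.
destruct (Nat.eq_dec i (S k)). subst. apply Z.gcd_divide_r.
eapply Z.divide_trans. apply Z.gcd_divide_l. apply IHk; lia. Qed.

Lemma zgcd_pos k q : (1 <= k)%nat -> 0 < q 1%nat -> 0 < zgcd_list k q.
Proof. intros Hk Hq. pose proof (zgcd_nonneg k q).
destruct (Z.eq_dec (zgcd_list k q) 0) as [E|E]; [|lia].
destruct (zgcd_div k q 1 ltac:(lia)) as [z Hz]. rewrite E in Hz. lia. Qed.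
Lemma main (q L : nat -> Z) (Q : Z) (k : nat) :
  (forall i, (1 <= i <= k)%nat -> 0 < q i <= Q /\ Q <= L i) ->
  forall n, (S n <= k)%nat ->
  exists al be, 0 <= al /\ be <= zsum (S n) (fun i => L i * q i) /\
   al * zgcd_list (S n) q <= zsum n (fun i => q i * q (S i)) /\
   (zsum (S n) (fun i => L i * q i) - be) * zgcd_list (S n) q <= zsum n (fun i => q i * q (S i)) /\
   zgcd_list (S n) q * Q <= be - al /\
   forall x, (zgcd_list (S n) q | x) -> al <= x <= be ->
     exists b, (forall i, (1 <= i <= S n)%nat -> 0 <= b i <= L i) /\ x = zsum (S n) (fun i => b i * q i).
Proof.
  intros Hq. induction n as [|n IH]; intros Hn.
  - assert (E : zgcd_list 1 q = q 1%nat) by (unfold zgcd_list; simpl; rewrite Z.gcd_0_r; 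
      destruct (Hq 1%nat ltac:(lia)); lia).
    assert (Es : zsum 1 (fun i => L i * q i) = L 1%nat * q 1%nat) by (unfold zsum; simpl; lia).
    destruct (Hq 1%nat ltac:(lia)) as [[H1 H2] H3].
    exists 0, (L 1%nat * q 1%nat). rewrite E, Es. unfold zsum at 1 2; simpl.
    split; [nia|]. split; [nia|]. split; [nia|]. split; [nia|]. split; [nia|].
    intros x [t Ht] Hx. exists (fun _ => t). split.
    + intros i Hi. assert (i = 1%nat) by lia. subst i x. nia.
    + unfold zsum; simpl. lia.
  - destruct (IH ltac:(lia)) as (al & be & Hal & Hbe & Has & Hbs & Hlen & Hrep).
    set (g := zgcd_list (S n) q) in *.
    set (qq := q (S (S n))).
    set (L' := L (S (S n))).
    set (qn := q (S n)).
    assert (Eg : zgcd_list (S (S n)) q = Z.gcd g qq) by (apply zgcd_S).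
    set (g' := zgcd_list (S (S n)) q) in *.
    destruct (Hq (S (S n)) ltac:(lia)) as [[Hqq1 Hqq2] HL'].
    destruct (Hq (S n) ltac:(lia)) as [[Hqn1 Hqn2] _].
    destruct (Hq 1%nat ltac:(lia)) as [[Hq11 _] _].
    fold qq L' in Hqq1, Hqq2, HL'. fold qn in Hqn1, Hqn2.
    assert (gpos : 0 < g) by (apply zgcd_pos; lia).
    assert (g'pos : 0 < g') by (apply zgcd_pos; lia).
    assert (gle : g <= qn) by (apply Z.divide_pos_le; [lia| apply zgcd_div; lia]).
    assert (Dg : (g' | g)) by (rewrite Eg; apply Z.gcd_divide_l).
    assert (Dq : (g' | qq)) by (rewrite Eg; apply Z.gcd_divide_r).
    destruct Dg as [d Hd]. destruct Dq as [c Hc].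
    assert (d1 : 1 <= d) by nia.
    assert (dle : d <= g) by nia.
    assert (g'le : g' <= g) by nia.
    destruct (Z.gcd_bezout g qq g' (eq_sym Eg)) as [u [v Huv]].
    rewrite (zsum_S (S n) (fun i => L i * q i)), (zsum_S n (fun i => q i * q (S i))). fold qq qn L'.
    set (Lt := zsum (S n) (fun i => L i * q i)) in *.
    set (Sn := zsum n (fun i => q i * q (S i))) in *.
    assert (P1 : 0 <= (d - 1) * qq) by (apply Z.mul_nonneg_nonneg; lia).
    exists (al + (d - 1) * qq), (be + (L' - d + 1) * qq).
    split; [lia|]. split; [lia|].
    split.
    { assert (al * g' <= al * g) by nia. assert (g * qq <= qn * qq) by nia.
      assert ((d - 1) * qq * g' = g * qq - g' * qq) by (rewrite Hd; ring). nia. }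
    split.
    { assert ((Lt - be) * g' <= (Lt - be) * g) by nia.
      assert (g * qq <= qn * qq) by nia.
      assert ((d - 1) * qq * g' = g * qq - g' * qq) by (rewrite Hd; ring). nia. }
    split.
    { assert (be - al >= d * g' * Q) by nia.
      assert (g' * Q >= qq) by nia.
      destruct (Z_le_gt_dec 0 (Q - 2 * d + 2)).
      - assert (0 <= (L' - 2*d + 2) * qq) by nia. nia.
      - assert ((L' - 2*d+2) * qq >= (Q - 2*d + 2) * Q) by nia.
        assert (d <= Q) by lia.
        destruct (Z.eq_dec g' 1).
        + nia.
        + assert ((d - 1) * (g' - 2) >= 0) by nia. nia. }
    intros x [t Ht] Hx.
    set (h := (x - al) / qq).
    assert (Hm1 := Z.div_mod (x - al) qq ltac:(lia)).
    assert (Hm1b := Z.mod_pos_bound (x - al) qq ltac:(lia)).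
    fold h in Hm1. set (m1 := (x - al) mod qq) in *.
    set (hi := Z.min L' h).
    set (b0 := t * v).
    assert (Hm2 := Z.div_mod (hi - b0) d ltac:(lia)).
    assert (Hm2b := Z.mod_pos_bound (hi - b0) d ltac:(lia)).
    set (w := (hi - b0) / d) in *. set (m2 := (hi - b0) mod d) in *.
    set (b := hi - m2).
    set (y := x - b * qq).
    assert (Hy : y = (t * u - w * c) * g).
    { unfold y. assert (b = b0 + d * w) by (unfold b; lia). rewrite H. unfold b0.
      rewrite Ht, <- Huv, Hc, Hd. ring. }
    assert (hih : hi <= h) by lia.
    assert (hiL : hi <= L') by lia.
    assert (bqle : b * qq <= x - al).
    { assert (b * qq <= h * qq) by (apply Z.mul_le_mono_nonneg_r; lia). lia. }
    assert (Hlo : x - be <= b * qq).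
    { destruct (Z.eq_dec hi L') as [E|E].
      - assert (b * qq >= (L' - d + 1) * qq) by (apply Z.le_ge, Z.mul_le_mono_nonneg_r; lia). lia.
      - assert (hi = h) by lia.
        assert (b * qq >= (h - d + 1) * qq) by (apply Z.le_ge, Z.mul_le_mono_nonneg_r; lia).
        assert (1 * Q <= g' * Q) by (apply Z.mul_le_mono_nonneg_r; lia).
        assert (d * qq <= d * (g' * Q)) by (apply Z.mul_le_mono_nonneg_l; lia).
        assert (g * Q = d * (g' * Q)) by (rewrite Hd; ring). lia. }
    assert (b0le : 0 <= b).
    { destruct (Z.eq_dec hi L') as [E|E].
      - lia.
      - assert (hi = h) by lia.
        destruct (Z_le_gt_dec h (d-2)).
        + assert (h * qq <= (d - 2) * qq) by (apply Z.mul_le_mono_nonneg_r; lia). lia.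
        + lia. }
    destruct (Hrep y ltac:(exists (t * u - w * c); exact Hy) ltac:(unfold y; lia)) as [bb [Hbb Hsum]].
    exists (fun i => if Nat.eqb i (S (S n)) then b else bb i). split.
    + intros i Hi. destruct (Nat.eqb_spec i (S (S n))).
      * subst i. fold L'. lia.
      * apply Hbb. lia.
    + rewrite zsum_S, Nat.eqb_refl. fold qq.
      rewrite (zsum_ext (S n) _ (fun i => bb i * q i)).
      * rewrite <- Hsum. unfold y. ring.
      * intros i Hi. destruct (Nat.eqb_spec i (S (S n))); [lia|reflexivity].
Qed.

Lemma zsum_sub k f g : zsum k (fun i => f i - g i) = zsum k f - zsum k g.
Proof. induction k. reflexivity. rewrite !zsum_S, IHk. ring. Qed.

Lemma maxl_ge (f : nat -> Z) l j : In j l -> f j <= fold_right Z.max 0 (map f l).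
Proof. induction l; simpl; intros H. contradiction. destruct H as [H|H].
subst; lia. specialize (IHl H). lia. Qed.

Lemma maxl_le (f : nat -> Z) l M : 0 <= M -> (forall j, In j l -> f j <= M) -> fold_right Z.max 0 (map f l) <= M.
Proof. induction l; simpl; intros H0 H. lia.
assert (f a <= M) by (apply H; auto). assert (fold_right Z.max 0 (map f l) <= M) by (apply IHl; auto). lia. Qed.

Lemma qle2 (a r m : Z) : 0 < r -> a <= m * r -> (inject_Z a / inject_Z r <= inject_Z m)%Q.
Proof. intros Hr H. destruct r as [|p|p]; try lia.
unfold Qle, Qdiv, Qmult, Qinv, inject_Z; simpl. nia. Qed.
Lemma qle3 (a r m : Z) : 0 < r -> m * r <= a -> (inject_Z m <= inject_Z a / inject_Z r)%Q.
Proof. intros Hr H. destruct r as [|p|p]; try lia.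
unfold Qle, Qdiv, Qmult, Qinv, inject_Z; simpl. nia. Qed.
Lemma qle4 (a s r m : Z) : 0 < r -> (inject_Z a / inject_Z r + inject_Z s / (inject_Z r * inject_Z r) <= inject_Z m)%Q -> a * r + s <= m * r * r.
Proof. intros Hr H. destruct r as [|p|p]; try lia.
unfold Qle, Qdiv, Qmult, Qplus, Qinv, inject_Z in H; simpl in H. rewrite ?Pos2Z.inj_mul in H. nia. Qed.
Lemma qle5 (a s r m : Z) : 0 < r -> (inject_Z m <= inject_Z a / inject_Z r - inject_Z s / (inject_Z r * inject_Z r))%Q -> m * r * r <= a * r - s.
Proof. intros Hr H. destruct r as [|p|p]; try lia.
unfold Qle, Qdiv, Qmult, Qminus, Qplus, Qopp, Qinv, inject_Z in H; simpl in H. rewrite ?Pos2Z.inj_mul in H. nia. Qed.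

Theorem lemma4p1 (k : nat) (q C D : nat -> Z) :
  (2 <= k)%nat ->
  (forall i, (1 <= i <= k)%nat -> (0 < q i)%Z) ->
  (forall i, (1 <= i <= k)%nat ->
     forall j, (1 <= j <= k)%nat -> (q j <= D i - C i)%Z) ->
  let r := zgcd_list k q in
  let Cs := zsum k (fun i => (C i * q i)%Z) in
  let Ds := zsum k (fun i => (D i * q i)%Z) in
  let Sq := zsum (k - 1) (fun i => (q i * q (Datatypes.S i))%Z) in
  (forall n, setA k q C D n ->
     exists m : Z, n = (m * r)%Z /\
       (inject_Z Cs / inject_Z r <= inject_Z m)%Q /\
       (inject_Z m <= inject_Z Ds / inject_Z r)%Q) /\
  (forall m : Z,
     (inject_Z Cs / inject_Z r + inject_Z Sq / (inject_Z r * inject_Z r)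
        <= inject_Z m)%Q ->
     (inject_Z m <= inject_Z Ds / inject_Z r
        - inject_Z Sq / (inject_Z r * inject_Z r))%Q ->
     setA k q C D (m * r)%Z).
Proof.
  intros Hk Hq Hqd r Cs Ds Sq.
  assert (rpos : 0 < r) by (apply zgcd_pos; [lia | apply Hq; lia]).
  assert (rdiv : forall i, (1 <= i <= k)%nat -> (r | q i)) by (intros; apply zgcd_div; auto).
  set (Q := fold_right Z.max 0 (map q (seq 1 k))).
  assert (HQ : forall i, (1 <= i <= k)%nat -> 0 < q i <= Q /\ Q <= D i - C i).
  { intros i Hi. split; [split|].
    - apply Hq; auto.
    - apply maxl_ge. apply in_seq. lia.
    - apply maxl_le.
      + assert (0 < q i) by (apply Hq; auto). assert (q i <= D i - C i) by (apply Hqd; auto). lia.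
      + intros j Hj. apply in_seq in Hj. apply Hqd; lia. }
  assert (EL : zsum k (fun i => (D i - C i) * q i) = Ds - Cs).
  { unfold Ds, Cs. rewrite <- zsum_sub. apply zsum_ext. intros; ring. }
  split.
  - intros n [a [Ha Hn]].
    assert (Hd : (r | n)).
    { rewrite Hn. apply zsum_div. intros i Hi. apply Z.divide_mul_r. auto. }
    destruct Hd as [m Hm]. exists m. split; [exact Hm|].
    assert (Cs <= n).
    { rewrite Hn. apply zsum_le. intros i Hi. apply Z.mul_le_mono_nonneg_r.
      assert (0 < q i) by (apply Hq; auto). lia. apply Ha; auto. }
    assert (n <= Ds).
    { rewrite Hn. apply zsum_le. intros i Hi. apply Z.mul_le_mono_nonneg_r.
      assert (0 < q i) by (apply Hq; auto). lia. apply Ha; auto. }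
    split; [apply qle2 | apply qle3]; lia.
  - intros m H1 H2. apply qle4 in H1; [|exact rpos]. apply qle5 in H2; [|exact rpos].
    destruct (main q (fun i => D i - C i) Q k HQ (k - 1) ltac:(lia)) as (al & be & Hal & Hbe & Has & Hbs & Hlen & Hrep).
    replace (S (k - 1)) with k in * by lia.
    fold r Sq in Has, Hbs, Hlen, Hrep. rewrite EL in Hbe, Hbs.
    assert (rC : (r | Cs)).
    { apply zsum_div. intros i Hi. apply Z.divide_mul_r. auto. }
    set (x := m * r - Cs).
    assert (Hx1 : al <= x).
    { apply (Z.mul_le_mono_pos_r _ _ r rpos). unfold x. nia. }
    assert (Hx2 : x <= be).
    { assert ((Ds - Cs - be) * r <= (Ds - Cs - x) * r) by (unfold x; nia).
      apply Z.mul_le_mono_pos_r in H; lia. }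
    destruct (Hrep x ltac:(apply Z.divide_sub_r; [apply Z.divide_mul_r; apply Z.divide_refl | exact rC]) ltac:(lia))
      as [b [Hb Hs]].
    exists (fun i => C i + b i). split.
    + intros i Hi. specialize (Hb i Hi). lia.
    + rewrite (zsum_ext k _ (fun i => C i * q i + b i * q i)) by (intros; ring).
      rewrite zsum_add. fold Cs. rewrite <- Hs. unfold x. ring.
Qed.
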